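(* Let $\alpha\ge\omega$. Then: (i) there are non-isomorphic representable cylindric algebras of dimension $\alpha$ each of which is a generating subreduct of the same $(\alpha+\omega)$-dimensional cylindric algebra; (ii) there exist $\mathfrak{A}\in\mathrm{RCA}_\alpha$, $\mathfrak{B}\in\mathrm{CA}_{\alpha+\omega}$ and an ideal $J\subseteq\mathfrak{B}$ such that $\mathfrak{A}\subseteq\mathrm{Nr}_\alpha\mathfrak{B}$, $A$ generates $\mathfrak{B}$, but $\mathrm{Ig}^{\mathfrak{B}}(J\cap A)\neq J$; (iii) there exist $\mathfrak{A},\mathfrak{A}'\in\mathrm{RCA}_\alpha$, $\mathfrak{B},\mathfrak{B}'\in\mathrm{CA}_{\alpha+\omega}$, embeddings $e_A:\mathfrak{A}\to\mathrm{Nr}_\alpha\mathfrak{B}$ and $e_{A'}:\mathfrak{A}'\to\mathrm{Nr}_\alpha\mathfrak{B}'$ with $\mathrm{Sg}^{\mathfrak{B}}e_A(A)=\mathfrak{B}$ and $\mathrm{Sg}^{\mathfrak{B}'}e_{A'}(A')=\mathfrak{B}'$, and an isomorphism $i:\mathfrak{A}\to\mathfrak{A}'$ for which there is no isomorphism $\bar i:\mathfrak{B}\to\mathfrak{B}'$ with $\bar i\circ e_A=e_{A'}\circ i$.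
   Context: $\mathrm{CA}_\beta$ is the class of cylindric algebras of dimension $\beta$ (Boolean algebras with ${\sf c}_i$, ${\sf d}_{ij}$, $i,j<\beta$, satisfying Tarski's axioms); $\mathrm{RCA}_\alpha$ those isomorphic to subdirect products of cylindric set algebras of dimension $\alpha$. For $\mathfrak{B}\in\mathrm{CA}_\beta$ and $\alpha<\beta$, $\mathrm{Nr}_\alpha\mathfrak{B}$ is the $\mathrm{CA}_\alpha$ with universe $\{x\in B:{\sf c}_ix=x\ \forall i\in\beta\setminus\alpha\}$ and the operations indexed below $\alpha$. $\mathfrak{A}$ is a generating subreduct of $\mathfrak{B}$ if $\mathfrak{A}\subseteq\mathrm{Nr}_\alpha\mathfrak{B}$ is a subalgebra and $A$ generates $\mathfrak{B}$. $\mathrm{Sg}^{\mathfrak{B}}X$ and $\mathrm{Ig}^{\mathfrak{B}}X$ denote the subalgebra and the (cylindric) ideal of $\mathfrak{B}$ generated by $X$. *)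

(* Defs.v *)
Set Implicit Arguments.
Unset Implicit Arguments.
Unset Strict Implicit.

Record CAType (I : Type) := MkCA {
  car :> Type;
  join : car -> car -> car;
  meet : car -> car -> car;
  compl : car -> car;
  zero : car;
  one : car;
  cyl : I -> car -> car;
  diag : I -> I -> car
}.

Arguments join {I} _ _ _.
Arguments meet {I} _ _ _.
Arguments compl {I} _ _.
Arguments zero {I} _.
Arguments one {I} _.
Arguments cyl {I} _ _ _.
Arguments diag {I} _ _ _.

Definition leq {I} (A : CAType I) (x y : A) : Prop := meet A x y = x.

(* Tarski's axioms for CA_I (Henkin–Monk–Tarski, Def. 1.1.1). *)
Definition is_CA {I : Type} (A : CAType I) : Prop :=
  (forall x y, join A x y = join A y x) /\
  (forall x y, meet A x y = meet A y x) /\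
  (forall x y z, join A x (join A y z) = join A (join A x y) z) /\
  (forall x y z, meet A x (meet A y z) = meet A (meet A x y) z) /\
  (forall x y, join A x (meet A x y) = x) /\
  (forall x y, meet A x (join A x y) = x) /\
  (forall x y z, meet A x (join A y z) = join A (meet A x y) (meet A x z)) /\
  (forall x, join A x (compl A x) = one A) /\
  (forall x, meet A x (compl A x) = zero A) /\
  (forall i, cyl A i (zero A) = zero A) /\
  (forall i x, join A x (cyl A i x) = cyl A i x) /\
  (forall i x y, cyl A i (meet A x (cyl A i y)) = meet A (cyl A i x) (cyl A i y)) /\
  (forall i j x, cyl A i (cyl A j x) = cyl A j (cyl A i x)) /\
  (forall i, diag A i i = one A) /\
  (forall i j k, k <> i -> k <> j ->
                 diag A i j = cyl A k (meet A (diag A i k) (diag A k j))) /\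
  (forall i j x, i <> j ->
                 meet A (cyl A i (meet A (diag A i j) x))
                        (cyl A i (meet A (diag A i j) (compl A x))) = zero A).

(* f : A -> B is a homomorphism from A to the r-reduct of B, i.e. it preserves
   the Boolean operations and sends c_i, d_ij to c_(r i), d_(r i)(r j). *)
Definition hom_r {I J : Type} (r : I -> J) (A : CAType I) (B : CAType J)
  (f : A -> B) : Prop :=
  (forall x y, f (join A x y) = join B (f x) (f y)) /\
  (forall x y, f (meet A x y) = meet B (f x) (f y)) /\
  (forall x, f (compl A x) = compl B (f x)) /\
  f (zero A) = zero B /\
  f (one A) = one B /\
  (forall i x, f (cyl A i x) = cyl B (r i) (f x)) /\
  (forall i j, f (diag A i j) = diag B (r i) (r j)).

Definition hom {I : Type} (A B : CAType I) (f : A -> B) : Prop :=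
  hom_r (fun i => i) A B f.

Definition injective {X Y : Type} (f : X -> Y) : Prop :=
  forall x y, f x = f y -> x = y.
Definition surjective {X Y : Type} (f : X -> Y) : Prop :=
  forall y, exists x, f x = y.

Definition iso {I : Type} (A B : CAType I) (f : A -> B) : Prop :=
  hom A B f /\ injective f /\ surjective f.

Definition isomorphic {I : Type} (A B : CAType I) : Prop :=
  exists f : A -> B, iso A B f.

Definition set_cyl {I U : Type} (i : I) (X : (I -> U) -> Prop) : (I -> U) -> Prop :=
  fun s => exists t, X t /\ forall j, j <> i -> t j = s j.

Definition fullCs (I U : Type) : CAType I :=
  @MkCA I ((I -> U) -> Prop)
    (fun X Y s => X s \/ Y s)
    (fun X Y s => X s /\ Y s)
    (fun X s => ~ X s)
    (fun _ => False)
    (fun _ => True)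
    (fun i X => set_cyl i X)
    (fun i j s => s i = s j).

Definition subuniverse {I : Type} (A : CAType I) (S : A -> Prop) : Prop :=
  (forall x y, S x -> S y -> S (join A x y)) /\
  (forall x y, S x -> S y -> S (meet A x y)) /\
  (forall x, S x -> S (compl A x)) /\
  S (zero A) /\ S (one A) /\
  (forall i x, S x -> S (cyl A i x)) /\
  (forall i j, S (diag A i j)).

Definition prodCs (I K : Type) (U : K -> Type) : CAType I :=
  @MkCA I (forall k, (I -> U k) -> Prop)
    (fun X Y k => join (fullCs I (U k)) (X k) (Y k))
    (fun X Y k => meet (fullCs I (U k)) (X k) (Y k))
    (fun X k => compl (fullCs I (U k)) (X k))
    (fun k => zero (fullCs I (U k)))
    (fun k => one (fullCs I (U k)))
    (fun i X k => cyl (fullCs I (U k)) i (X k))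
    (fun i j k => diag (fullCs I (U k)) i j).

(* RCA_I: A is isomorphic to a subdirect product of cylindric set algebras
   (the Cs's being the subalgebras S k of full set algebras with bases U k):
   there is an injective homomorphism into the product of the S k whose
   composition with every projection is onto S k. *)
Definition is_RCA {I : Type} (A : CAType I) : Prop :=
  exists (K : Type) (U : K -> Type) (S : forall k, ((I -> U k) -> Prop) -> Prop)
         (h : A -> prodCs I K U),
    (forall k, subuniverse (fullCs I (U k)) (S k)) /\
    hom A (prodCs I K U) h /\ injective h /\
    (forall x k, S k (h x k)) /\
    (forall k X, S k X -> exists x, h x k = X).

(* Neat reduct: A embeds (as a subalgebra) into Nr_I B, where B has
   dimension I + nat (i.e. alpha + omega) and I sits as the initial part. *)
Definition embeds_Nr {I : Type} (A : CAType I) (B : CAType (I + nat)) (e : A -> B)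
  : Prop :=
  hom_r inl A B e /\ injective e /\
  (forall x n, cyl B (inr n) (e x) = e x).

Definition generates {I : Type} (B : CAType I) (X : B -> Prop) : Prop :=
  forall S : B -> Prop, subuniverse B S -> (forall x, X x -> S x) -> forall b, S b.

Definition is_ideal {I : Type} (B : CAType I) (J : B -> Prop) : Prop :=
  J (zero B) /\
  (forall x y, J x -> J y -> J (join B x y)) /\
  (forall x y, leq B x y -> J y -> J x) /\
  (forall i x, J x -> J (cyl B i x)).

Definition Ig {I : Type} (B : CAType I) (X : B -> Prop) : B -> Prop :=
  fun b => forall J, is_ideal B J -> (forall x, X x -> J x) -> J b.

Definition gen_subreduct {I : Type} (A : CAType I) (B : CAType (I + nat)) (e : A -> B)
  : Prop :=
  embeds_Nr A B e /\ generates B (fun b => exists a, e a = b).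

(* Main.v *)
Require Import Defs.
From Stdlib Require Import Classical ClassicalEpsilon FunctionalExtensionality PropExtensionality ProofIrrelevance List Arith Lia.
Import ListNotations.

Definition dec (P : Prop) : {P} + {~P} := excluded_middle_informative P.

Definition upd {T U : Type} (s : T -> U) (k : T) (v : U) : T -> U :=
  fun c => if dec (c = k) then v else s c.

Lemma upd_eq {T U} (s : T -> U) k v : upd s k v k = v.
Proof. unfold upd. destruct (dec (k = k)); congruence. Qed.
Lemma upd_neq {T U} (s : T -> U) k v c : c <> k -> upd s k v c = s c.
Proof. intros H. unfold upd. destruct (dec (c = k)); congruence. Qed.

Ltac fext := apply functional_extensionality; intro.
Ltac pext := apply propositional_extensionality.

Lemma fullCs_CA (T U : Type) : is_CA (fullCs T U).
Proof.
  unfold is_CA; simpl.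
  repeat split; intros; apply functional_extensionality; intro s;
    apply propositional_extensionality; unfold set_cyl.
  - tauto.
  - tauto.
  - tauto.
  - tauto.
  - tauto.
  - tauto.
  - tauto.
  - split; [intros _; exact I|intros _; apply classic].
  - tauto.
  - split; [intros [t [[] _]]|contradiction].
  - split.
    + intros [H|H]; [exists s; split; auto|exact H].
    + intros H; right; exact H.
  - split.
    + intros [t [[Hx [t' [Hy Ht']]] Ht]]. split.
      * exists t; auto.
      * exists t'; split; auto. intros j Hj. rewrite Ht', Ht; auto.
    + intros [[t1 [H1 E1]] [t2 [H2 E2]]]. exists t1. split; [split; auto|auto].
      exists t2. split; auto. intros c Hc. rewrite E2, E1; auto.
  - split.
    + intros [t [[t' [Hx E']] E]].
      exists (upd s j (t' j)). split.
      * exists t'. split; auto. intros c Hc. destruct (dec (c = j)).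
        -- subst. rewrite upd_eq. auto.
        -- rewrite upd_neq by auto. rewrite E', E; auto.
      * intros c Hc. rewrite upd_neq; auto.
    + intros [t [[t' [Hx E']] E]].
      exists (upd s i (t' i)). split.
      * exists t'. split; auto. intros c Hc. destruct (dec (c = i)).
        -- subst. rewrite upd_eq. auto.
        -- rewrite upd_neq by auto. rewrite E', E; auto.
      * intros c Hc. rewrite upd_neq; auto.
  - split; auto.
  - split.
    + intros E. exists (upd s k (s i)). split.
      * rewrite upd_eq, !upd_neq by auto. auto.
      * intros c Hc. rewrite upd_neq; auto.
    + intros [t [[E1 E2] E]]. rewrite <- (E i), <- (E j) by auto. congruence.
  - split; [|contradiction].
    intros [[t1 [[D1 X1] E1]] [t2 [[D2 X2] E2]]].
    assert (t1 = t2).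
    { apply functional_extensionality. intro c. destruct (dec (c = i)).
      - subst. rewrite D1, D2, E1, E2; auto.
      - rewrite E1, E2; auto. }
    subst. contradiction.
Qed.


Section Sub.
Context {T : Type} (C : CAType T) (P : C -> Prop) (H : subuniverse C P).

Definition Hj' := proj1 H.
Definition Hm' := proj1 (proj2 H).
Definition Hc' := proj1 (proj2 (proj2 H)).
Definition H0' := proj1 (proj2 (proj2 (proj2 H))).
Definition H1' := proj1 (proj2 (proj2 (proj2 (proj2 H)))).
Definition Hcy' := proj1 (proj2 (proj2 (proj2 (proj2 (proj2 H))))).
Definition Hd' := proj2 (proj2 (proj2 (proj2 (proj2 (proj2 H))))).

Definition SubCA : CAType T :=
  @MkCA T {x : C | P x}
    (fun x y => exist _ (join C (proj1_sig x) (proj1_sig y)) (Hj' _ _ (proj2_sig x) (proj2_sig y)))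
    (fun x y => exist _ (meet C (proj1_sig x) (proj1_sig y)) (Hm' _ _ (proj2_sig x) (proj2_sig y)))
    (fun x => exist _ (compl C (proj1_sig x)) (Hc' _ (proj2_sig x)))
    (exist _ (zero C) H0') (exist _ (one C) H1')
    (fun i x => exist _ (cyl C i (proj1_sig x)) (Hcy' i _ (proj2_sig x)))
    (fun i j => exist _ (diag C i j) (Hd' i j)).

Definition sval (x : SubCA) : C := proj1_sig (x : {x : C | P x}).

Lemma sval_inj (x y : SubCA) : sval x = sval y -> x = y.
Proof.
  destruct x as [x px], y as [y py]. unfold sval. simpl. intros E. subst. f_equal. apply proof_irrelevance.
Qed.

Lemma sval_join x y : sval (join SubCA x y) = join C (sval x) (sval y). Proof. reflexivity. Qed.
Lemma sval_meet x y : sval (meet SubCA x y) = meet C (sval x) (sval y). Proof. reflexivity. Qed.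
Lemma sval_compl x : sval (compl SubCA x) = compl C (sval x). Proof. reflexivity. Qed.
Lemma sval_zero : sval (zero SubCA) = zero C. Proof. reflexivity. Qed.
Lemma sval_one : sval (one SubCA) = one C. Proof. reflexivity. Qed.
Lemma sval_cyl i x : sval (cyl SubCA i x) = cyl C i (sval x). Proof. reflexivity. Qed.
Lemma sval_diag i j : sval (diag SubCA i j) = diag C i j. Proof. reflexivity. Qed.
Lemma sval_P x : P (sval x). Proof. exact (proj2_sig x). Qed.
Definition smk (c : C) (pc : P c) : SubCA := exist _ c pc.
Lemma sval_smk c pc : sval (smk c pc) = c. Proof. reflexivity. Qed.

Hint Rewrite sval_join sval_meet sval_compl sval_zero sval_one sval_cyl sval_diag : sv.

Lemma SubCA_CA : is_CA C -> is_CA SubCA.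
Proof.
  intros HC. unfold is_CA in *.
  destruct HC as [A1 [A2 [A3 [A4 [A5 [A6 [A7 [A8 [A9 [C1 [C2 [C3 [C4 [C5 [C6 C7]]]]]]]]]]]]]]].
  repeat split; intros; apply sval_inj; autorewrite with sv; auto.
Qed.

Lemma sval_hom : hom SubCA C sval.
Proof. unfold hom, hom_r. repeat split; intros; autorewrite with sv; auto. Qed.
End Sub.

Lemma Sub_full_RCA (T U : Type) (P : fullCs T U -> Prop) (H : subuniverse (fullCs T U) P) :
  is_RCA (SubCA (fullCs T U) P H).
Proof.
  exists unit, (fun _ => U), (fun _ => P), (fun x _ => sval _ P H x).
  split; [intros; exact H|].
  split.
  { unfold hom, hom_r. repeat split; intros; apply functional_extensionality; intros [];
    rewrite ?sval_join, ?sval_meet, ?sval_compl, ?sval_zero, ?sval_one, ?sval_cyl, ?sval_diag; reflexivity. }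
  split.
  { intros x y E. apply sval_inj. exact (f_equal (fun g => g tt) E). }
  split.
  { intros x k. apply sval_P. }
  { intros [] X HX. exists (smk _ P H X HX). rewrite sval_smk. reflexivity. }
Qed.

Section Gen.
Context {T U : Type} (G : ((T -> U) -> Prop) -> Prop).
Inductive Gen : ((T -> U) -> Prop) -> Prop :=
| g_base : forall x, G x -> Gen x
| g_join : forall x y, Gen x -> Gen y -> Gen (join (fullCs T U) x y)
| g_meet : forall x y, Gen x -> Gen y -> Gen (meet (fullCs T U) x y)
| g_compl : forall x, Gen x -> Gen (compl (fullCs T U) x)
| g_zero : Gen (zero (fullCs T U))
| g_one : Gen (one (fullCs T U))
| g_cyl : forall i x, Gen x -> Gen (cyl (fullCs T U) i x)
| g_diag : forall i j, Gen (diag (fullCs T U) i j).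

Lemma Gen_sub : subuniverse (fullCs T U) Gen.
Proof. unfold subuniverse; repeat split; intros. all: first [apply g_join|apply g_meet|apply g_compl|apply g_zero|apply g_one|apply g_cyl|apply g_diag]; auto. Qed.

Definition SgCA : CAType T := SubCA (fullCs T U) Gen Gen_sub.

Lemma Sg_generates (X : SgCA -> Prop) :
  (forall b, G b -> exists x, X x /\ sval _ _ _ x = b) -> generates SgCA X.
Proof.
  intros HX S HS HXS b0.
  assert (forall v, Gen v -> forall b : SgCA, sval _ _ _ b = v -> S b) as K.
  { induction 1; intros b Eb.
    - destruct (HX x H) as [x' [Hx' E']]. replace b with x'. apply HXS; auto.
      apply sval_inj. congruence.
    - destruct HS as [Hj _].
      replace b with (join SgCA (smk (fullCs T U) Gen Gen_sub x H) (smk (fullCs T U) Gen Gen_sub y H0)).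
      + apply Hj; [apply IHGen1|apply IHGen2]; apply sval_smk.
      + apply sval_inj. rewrite Eb. reflexivity.
    - destruct HS as [_ [Hm _]].
      replace b with (meet SgCA (smk (fullCs T U) Gen Gen_sub x H) (smk (fullCs T U) Gen Gen_sub y H0)).
      + apply Hm; [apply IHGen1|apply IHGen2]; apply sval_smk.
      + apply sval_inj. rewrite Eb. reflexivity.
    - destruct HS as [_ [_ [Hc _]]].
      replace b with (compl SgCA (smk (fullCs T U) Gen Gen_sub x H)).
      + apply Hc; apply IHGen; apply sval_smk.
      + apply sval_inj. rewrite Eb. reflexivity.
    - destruct HS as [_ [_ [_ [H0 _]]]]. replace b with (zero SgCA); auto.
      apply sval_inj. rewrite Eb. reflexivity.
    - destruct HS as [_ [_ [_ [_ [H1 _]]]]]. replace b with (one SgCA); auto.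
      apply sval_inj. rewrite Eb. reflexivity.
    - destruct HS as [_ [_ [_ [_ [_ [Hcy _]]]]]].
      replace b with (cyl SgCA i (smk (fullCs T U) Gen Gen_sub x H)).
      + apply Hcy; apply IHGen; apply sval_smk.
      + apply sval_inj. rewrite Eb. reflexivity.
    - destruct HS as [_ [_ [_ [_ [_ [_ Hd]]]]]]. replace b with (diag SgCA i j); auto.
      apply sval_inj. rewrite Eb. reflexivity. }
  apply (K (sval _ _ _ b0)); auto. apply sval_P.
Qed.
End Gen.


Section Core.
Variable I : Type.
Variable f : nat -> I.
Hypothesis Hf : injective f.

Definition finv (i : I) : option nat :=
  match dec (exists n, f n = i) with
  | left p => Some (proj1_sig (constructive_indefinite_description _ p))
  | right _ => None end.

Lemma finv_Some i n : finv i = Some n -> f n = i.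
Proof.
  unfold finv. destruct (dec _) as [p|p]; [|discriminate].
  destruct (constructive_indefinite_description _ p) as [m Hm]. simpl. congruence.
Qed.
Lemma finv_f n : finv (f n) = Some n.
Proof.
  destruct (finv (f n)) eqn:E.
  - apply finv_Some in E. apply Hf in E. congruence.
  - unfold finv in E. destruct (dec _) as [p|p]; [discriminate|]. exfalso; apply p; eauto.
Qed.
Lemma finv_None i : finv i = None -> forall n, f n <> i.
Proof. intros E n H. subst. rewrite finv_f in E. discriminate. Qed.

Definition tau (M : nat) (i : I) : I :=
  match finv i with Some n => if Nat.leb M n then f (S n) else i | None => i end.
Definition h := tau 0.

Lemma tau_f_ge M n : M <= n -> tau M (f n) = f (S n).
Proof. intros. unfold tau. rewrite finv_f. destruct (Nat.leb_spec M n); auto; lia. Qed.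
Lemma tau_f_lt M n : n < M -> tau M (f n) = f n.
Proof. intros. unfold tau. rewrite finv_f. destruct (Nat.leb_spec M n); auto; lia. Qed.
Lemma tau_notf M i : (forall n, f n <> i) -> tau M i = i.
Proof.
  intros H. unfold tau. destruct (finv i) eqn:E; auto. apply finv_Some in E. exfalso; eapply H; eauto.
Qed.

Lemma f_cases (i : I) : (exists n, f n = i) \/ (forall n, f n <> i).
Proof. destruct (classic (exists n, f n = i)); [left; auto|right; intros n E; apply H; eauto]. Qed.

Lemma tau_inj M : injective (tau M).
Proof.
  intros x y E.
  destruct (f_cases x) as [[n Hn]|Hx]; destruct (f_cases y) as [[m Hm]|Hy]; subst.
  - destruct (le_lt_dec M n); destruct (le_lt_dec M m).
    + rewrite !tau_f_ge in E by auto. apply Hf in E. congruence.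
    + rewrite tau_f_ge, tau_f_lt in E by auto. apply Hf in E. lia.
    + rewrite tau_f_lt, tau_f_ge in E by auto. apply Hf in E. lia.
    + rewrite !tau_f_lt in E by auto. auto.
  - rewrite (tau_notf M y Hy) in E. destruct (le_lt_dec M n).
    + rewrite tau_f_ge in E by auto. exfalso; eapply Hy; eauto.
    + rewrite tau_f_lt in E by auto. exfalso; eapply Hy; eauto.
  - rewrite (tau_notf M x Hx) in E. destruct (le_lt_dec M m).
    + rewrite tau_f_ge in E by auto. exfalso; eapply Hx; eauto.
    + rewrite tau_f_lt in E by auto. exfalso; eapply Hx; eauto.
  - rewrite (tau_notf M x Hx), (tau_notf M y Hy) in E. auto.
Qed.

Lemma h_inj : injective h. Proof. apply tau_inj. Qed.
Lemma h_f n : h (f n) = f (S n). Proof. apply tau_f_ge. lia. Qed.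
Lemma h_notf i : (forall n, f n <> i) -> h i = i. Proof. apply tau_notf. Qed.
Lemma h_miss k : h k <> f 0.
Proof.
  destruct (f_cases k) as [[n Hn]|Hk]; subst.
  - rewrite h_f. intros E; apply Hf in E; discriminate.
  - rewrite h_notf by auto. intros E; subst; eapply Hk; eauto.
Qed.

Lemma avoid (L : list I) : exists N, forall n, N <= n -> ~ In (f n) L.
Proof.
  induction L as [|x L [N IH]].
  - exists 0. intros n _ [].
  - destruct (f_cases x) as [[m Hm]|Hx].
    + exists (max N (S m)). intros n Hn [E|E].
      * subst. apply Hf in E. lia.
      * apply (IH n); auto; lia.
    + exists N. intros n Hn [E|E]; [eapply Hx; eauto|apply (IH n); auto].
Qed.

Lemma exists_notin (L : list I) : exists k, ~ In k L.
Proof. destruct (avoid L) as [N HN]. exists (f N). apply HN. lia. Qed.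

Definition Cls (b r : I -> I) := exists L : list I, forall k, ~ In k L -> r k = b k.
Definition C0 := Cls (fun x => x).
Definition C1 := Cls h.
Definition C01 r := C0 r \/ C1 r.

Lemma Cls_upd b r i u : Cls b r -> Cls b (upd r i u).
Proof.
  intros [L HL]. exists (i :: L). intros k Hk. rewrite upd_neq.
  - apply HL. intro; apply Hk; right; auto.
  - intro; apply Hk; left; auto.
Qed.
Lemma C01_upd r i u : C01 r -> C01 (upd r i u).
Proof. intros [H|H]; [left|right]; apply Cls_upd; auto. Qed.

Lemma Cls_fin b r r' (L : list I) : Cls b r -> (forall k, ~ In k L -> r' k = r k) -> Cls b r'.
Proof.
  intros [L0 H0] H. exists (L ++ L0). intros k Hk. rewrite H, H0; auto;
  intro; apply Hk; apply in_or_app; auto.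
Qed.

Lemma C0_C1 r : C0 r -> C1 r -> False.
Proof.
  intros [L1 H1] [L2 H2]. destruct (avoid (L1 ++ L2)) as [N HN].
  assert (~ In (f N) L1 /\ ~ In (f N) L2) as [A1 A2].
  { split; intro; apply (HN N); auto; apply in_or_app; auto. }
  specialize (H1 _ A1). specialize (H2 _ A2). rewrite H1, h_f in H2. apply Hf in H2. lia.
Qed.

Lemma nodup_ex (L : list I) : exists L0, NoDup L0 /\ forall x, In x L0 <-> In x L.
Proof.
  induction L as [|x L [L0 [N E]]].
  - exists []. split; [constructor|]. tauto.
  - destruct (classic (In x L0)).
    + exists L0. split; auto. intros y; rewrite E. simpl. split; auto.
      intros [->|H']; auto. apply E; auto.
    + exists (x :: L0). split; [constructor; auto|]. intros y. simpl. rewrite E. tauto.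
Qed.

Lemma Cls_nodup b r : Cls b r -> exists L0, NoDup L0 /\ forall k, ~ In k L0 -> r k = b k.
Proof.
  intros [L HL]. destruct (nodup_ex L) as [L0 [N E]]. exists L0. split; auto.
  intros k Hk. apply HL. rewrite <- E. auto.
Qed.

Lemma map_nodup (g : I -> I) (Hg : injective g) (L : list I) : NoDup L -> NoDup (map g L).
Proof.
  induction 1; simpl; constructor; auto.
  intros Hin. apply in_map_iff in Hin. destruct Hin as [y [Ey Hy]]. apply Hg in Ey. subst. auto.
Qed.

Lemma C0_inj_surj r : C0 r -> injective r -> forall v, exists k, r k = v.
Proof.
  intros HC Hr. destruct (Cls_nodup _ _ HC) as [L0 [N HL]].
  assert (incl (map r L0) L0) as Hi.
  { intros v Hv. apply in_map_iff in Hv. destruct Hv as [c [<- Hc]].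
    destruct (classic (In (r c) L0)) as [|Hn]; auto.
    pose proof (HL _ Hn) as E. apply Hr in E. rewrite E in Hn. contradiction. }
  assert (incl L0 (map r L0)) as Hi2.
  { apply NoDup_length_incl; [apply map_nodup; auto|rewrite length_map; auto|auto]. }
  intros v. destruct (classic (In v L0)) as [Hv|Hv].
  - apply Hi2 in Hv. apply in_map_iff in Hv. destruct Hv as [c [E _]]. eauto.
  - exists v. apply HL. auto.
Qed.

Lemma missing r : (C1 r \/ (C0 r /\ exists a b, a <> b /\ r a = r b)) -> exists v, forall k, r k <> v.
Proof.
  intros Hcase.
  apply NNPP. intros Hno.
  assert (Hs : forall v, exists k, r k = v).
  { intros v. apply NNPP. intros Hv. apply Hno. exists v. intros k Hk. apply Hv. eauto. }
  clear Hno.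
  destruct Hcase as [HC|[HC [a [b [Hab Eab]]]]].
  - destruct (Cls_nodup _ _ HC) as [L0 [N HL]].
    assert (incl (f 0 :: map h L0) (map r L0)) as Hi.
    { intros v Hv. destruct (Hs v) as [k <-].
      destruct (classic (In k L0)) as [Hk|Hk]; [apply in_map; auto|].
      exfalso. rewrite (HL _ Hk) in Hv. destruct Hv as [Hv|Hv].
      - eapply h_miss; eauto.
      - apply in_map_iff in Hv. destruct Hv as [c [Ec Hc]]. apply h_inj in Ec. subst. auto. }
    apply NoDup_incl_length in Hi.
    + simpl in Hi. rewrite !length_map in Hi. lia.
    + constructor.
      * intros Hin. apply in_map_iff in Hin. destruct Hin as [c [Ec _]]. eapply h_miss; eauto.
      * apply map_nodup; auto. apply h_inj.
  - destruct (Cls_nodup _ _ HC) as [L0 [N HL]].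
    assert (Hv0 : forall v, In v L0 -> exists k, In k L0 /\ r k = v).
    { intros v Hv. destruct (Hs v) as [k Ek]. destruct (classic (In k L0)) as [Hk|Hk]; eauto.
      rewrite (HL _ Hk) in Ek. subst. eauto. }
    assert (Hkey : forall a b, a <> b -> r a = r b -> In b L0 -> False).
    { clear a b Hab Eab. intros a b Hab Eab Hb.
      destruct (in_split _ _ Hb) as [l1 [l2 El]].
      assert (incl L0 (map r (l1 ++ l2))) as Hi.
      { intros v Hv. destruct (Hv0 v Hv) as [k [Hk <-]].
        destruct (classic (k = b)) as [->|Hkb].
        - rewrite <- Eab. destruct (classic (In a L0)) as [Ha|Ha].
          + apply in_map. rewrite El in Ha. apply in_app_or in Ha. apply in_or_app.
            destruct Ha as [Ha|[Ha|Ha]]; auto. congruence.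
          + exfalso. rewrite (HL _ Ha) in Eab. apply Ha. rewrite Eab. exact Hv.
        - apply in_map. rewrite El in Hk. apply in_app_or in Hk. apply in_or_app.
          destruct Hk as [Hk|[Hk|Hk]]; auto. congruence. }
      apply NoDup_incl_length in Hi; auto. rewrite length_map, El, !length_app in Hi. simpl in Hi. lia. }
    destruct (classic (In b L0)) as [Hb|Hb]; [eapply Hkey; eauto|].
    destruct (classic (In a L0)) as [Ha|Ha]; [eapply (Hkey b a); eauto|].
    rewrite (HL _ Ha), (HL _ Hb) in Eab. exact (Hab Eab).
Qed.

Lemma fresh_outside r (G : list I) : C01 r -> exists k, ~ In k G /\ forall j, In j G -> r k <> r j.
Proof.
  intros HC.
  assert (exists b, (b = (fun x : I => x) \/ b = h) /\ Cls b r) as [b [Hb HL]].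
  { destruct HC as [H|H]; [exists (fun x => x)|exists h]; split; auto. }
  destruct HL as [L HL].
  destruct (avoid (G ++ L ++ map r G)) as [N HN].
  exists (f N). assert (A := HN N (le_n N)).
  split; [intro; apply A; apply in_or_app; auto|].
  intros j Hj E. rewrite HL in E by (intro; apply A; apply in_or_app; right; apply in_or_app; auto).
  destruct Hb as [->| ->].
  - apply A. apply in_or_app; right; apply in_or_app; right. rewrite E. apply in_map; auto.
  - rewrite h_f in E. apply (HN (S N)); [lia|]. apply in_or_app; right; apply in_or_app; right.
    rewrite E. apply in_map; auto.
Qed.


Definition Out (G : list I) (r : I -> I) (a : I) := exists k, ~ In k G /\ r k = r a.
Definition Dup (G : list I) (r : I -> I) := exists k1 k2, ~ In k1 G /\ ~ In k2 G /\ k1 <> k2 /\ r k1 = r k2.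
Definition V (G : list I) (r r' : I -> I) :=
  (forall a b, In a G -> In b G -> (r a = r b <-> r' a = r' b)) /\
  (forall a, In a G -> (Out G r a <-> Out G r' a)) /\
  (Dup G r <-> Dup G r').
Definition ZR G r r' := C01 r /\ C01 r' /\ V G r r'.

Lemma V_sym G r r' : V G r r' -> V G r' r.
Proof.
  intros [K [O D]]. split; [|split].
  - intros a b Ha Hb. symmetry. auto.
  - intros a Ha. symmetry. auto.
  - symmetry. auto.
Qed.
Lemma ZR_sym G r r' : ZR G r r' -> ZR G r' r.
Proof. intros [A [B C]]. split; [|split]; auto. apply V_sym; auto. Qed.

Lemma V_mono_half G G' r r' : incl G G' -> V G' r r' ->
  (forall a, In a G -> Out G r a -> Out G r' a) /\ (Dup G r -> Dup G r').
Proof.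
  intros Hi [K [O D]]. split.
  - intros a Ha [k [Hk Ek]].
    destruct (classic (In k G')) as [Hk'|Hk'].
    + exists k. split; auto. apply K; auto.
    + assert (Out G' r a) as Ho by (exists k; auto).
      apply O in Ho; auto. destruct Ho as [k' [Hk'' Ek']]. exists k'. split; auto.
  - intros [k1 [k2 [H1 [H2 [H12 E12]]]]].
    destruct (classic (In k1 G')) as [A1|A1]; destruct (classic (In k2 G')) as [A2|A2].
    + exists k1, k2. repeat split; auto. apply K; auto.
    + assert (Out G' r k1) as Ho by (exists k2; auto).
      apply O in Ho; auto. destruct Ho as [k' [Hk' Ek']].
      exists k', k1. repeat split; auto. intro; subst; contradiction.
    + assert (Out G' r k2) as Ho by (exists k1; auto).
      apply O in Ho; auto. destruct Ho as [k' [Hk' Ek']].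
      exists k', k2. repeat split; auto. intro; subst; contradiction.
    + assert (Dup G' r) as Hd by (exists k1, k2; auto). apply D in Hd.
      destruct Hd as [x [y [Hx [Hy [Hxy Exy]]]]]. exists x, y. repeat split; auto.
Qed.

Lemma V_mono G G' r r' : incl G G' -> V G' r r' -> V G r r'.
Proof.
  intros Hi HV. destruct (V_mono_half _ _ _ _ Hi HV) as [O1 D1].
  destruct (V_mono_half _ _ _ _ Hi (V_sym _ _ _ HV)) as [O2 D2].
  destruct HV as [K _]. split; [|split].
  - intros a b Ha Hb. apply K; auto.
  - intros a Ha. split; auto.
  - split; auto.
Qed.

Lemma forth G r r' i u : C01 r' -> In i G -> V G r r' ->
  exists u', V G (upd r i u) (upd r' i u').
Proof.
  intros HC Hi [K [O D]].
  assert (Hu : forall (s : I -> I) v c, c <> i -> upd s i v c = s c) by (intros; apply upd_neq; auto).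
  assert (Hout : forall (s : I -> I) v a, In a G -> a <> i -> (Out G (upd s i v) a <-> Out G s a)).
  { intros s v a Ha Hai. unfold Out. split; intros [k [Hk Ek]]; exists k; split; auto;
    rewrite !Hu in * by (auto; intro; subst; contradiction); auto. }
  assert (Hdup : forall (s : I -> I) v, Dup G (upd s i v) <-> Dup G s).
  { intros s v. unfold Dup. split; intros [k1 [k2 [H1 [H2 [H12 E]]]]]; exists k1, k2;
    repeat split; auto; rewrite !Hu in * by (intro; subst; contradiction); auto. }
  destruct (classic (exists j, In j G /\ j <> i /\ r j = u)) as [[j [Hj [Hji Ej]]]|NA].
  {
    exists (r' j). split; [|split].
    - intros a b Ha Hb.
      destruct (classic (a = i)) as [->|Hai]; destruct (classic (b = i)) as [->|Hbi].
      + rewrite !upd_eq. tauto.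
      + rewrite !upd_eq, !Hu by auto. subst. apply K; auto.
      + rewrite !upd_eq, !Hu by auto. subst. split; intro E; symmetry; apply K; auto; symmetry; auto.
      + rewrite !Hu by auto. apply K; auto.
    - intros a Ha. destruct (classic (a = i)) as [->|Hai].
      + unfold Out. rewrite !upd_eq.
        split; intros [k [Hk Ek]]; rewrite Hu in Ek by (intro; subst; contradiction).
        * assert (Out G r j) as Hoj by (exists k; split; auto; congruence).
          apply O in Hoj; auto. destruct Hoj as [k' [Hk' Ek']]. exists k'. split; auto.
          rewrite Hu by (intro; subst; contradiction). auto.
        * assert (Out G r' j) as Hoj by (exists k; split; auto; congruence).
          apply O in Hoj; auto. destruct Hoj as [k' [Hk' Ek']]. exists k'. split; auto.
          rewrite Hu by (intro; subst; contradiction). congruence.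
      + rewrite !Hout by auto. apply O; auto.
    - rewrite !Hdup. auto. }
  destruct (classic (exists k, ~ In k G /\ r k = u)) as [[k [Hk Ek]]|NB].
  {
    destruct (fresh_outside r' G HC) as [k' [Hk' Ek']].
    exists (r' k'). split; [|split].
    - intros a b Ha Hb.
      destruct (classic (a = i)) as [->|Hai]; destruct (classic (b = i)) as [->|Hbi].
      + rewrite !upd_eq. tauto.
      + rewrite !upd_eq, !Hu by auto. split; intro E.
        * exfalso. apply NA. exists b. auto.
        * exfalso. first [apply (Ek' a Ha); congruence | apply (Ek' b Hb); congruence].
      + rewrite !upd_eq, !Hu by auto. split; intro E.
        * exfalso. apply NA. exists a. auto.
        * exfalso. first [apply (Ek' a Ha); congruence | apply (Ek' b Hb); congruence].
      + rewrite !Hu by auto. apply K; auto.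
    - intros a Ha. destruct (classic (a = i)) as [->|Hai].
      + unfold Out. rewrite !upd_eq. split; intros _.
        * exists k'. split; auto. rewrite Hu; auto. intro; subst; contradiction.
        * exists k. split; auto. rewrite Hu; auto. intro; subst; contradiction.
      + rewrite !Hout by auto. apply O; auto.
    - rewrite !Hdup. auto. }
  assert (Hfr : exists u', forall c, c <> i -> r' c <> u').
  { destruct (classic (forall c, c <> i -> r' c <> r' i)) as [Hq|Hq]; [eauto|].
    apply not_all_ex_not in Hq. destruct Hq as [c Hc].
    assert (c <> i /\ r' c = r' i) as [Hci Ec] by (split; [intro; apply Hc; intro; contradiction|apply NNPP; intro; apply Hc; auto]).
    destruct (missing r') as [v Hv].
    - destruct HC as [HC|HC]; [right; split; auto; exists c, i; auto|left; auto].
    - exists v. intros c' _. apply Hv. }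
  destruct Hfr as [u' Hu'].
  exists u'. split; [|split].
  - intros a b Ha Hb.
    destruct (classic (a = i)) as [->|Hai]; destruct (classic (b = i)) as [->|Hbi].
    + rewrite !upd_eq. tauto.
    + rewrite !upd_eq, !Hu by auto. split; intro E.
      * exfalso. apply NA. exists b. auto.
      * exfalso. first [apply (Hu' a Hai); congruence | apply (Hu' b Hbi); congruence].
    + rewrite !upd_eq, !Hu by auto. split; intro E.
      * exfalso. apply NA. exists a. auto.
      * exfalso. first [apply (Hu' a Hai); congruence | apply (Hu' b Hbi); congruence].
    + rewrite !Hu by auto. apply K; auto.
  - intros a Ha. destruct (classic (a = i)) as [->|Hai].
    + unfold Out. rewrite !upd_eq. split; intros [k [Hk Ek]]; exfalso.
      * rewrite Hu in Ek by (intro; subst; contradiction). apply NB. eauto.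
      * rewrite Hu in Ek by (intro; subst; contradiction). eapply Hu'; eauto. intro; subst; contradiction.
    + rewrite !Hout by auto. apply O; auto.
  - rewrite !Hdup. auto.
Qed.

Definition InA (X : (I -> I) -> Prop) := exists G, forall r r', ZR G r r' -> (X r <-> X r').

Lemma upd_self (t : I -> I) i (s : I -> I) : (forall j, j <> i -> t j = s j) -> t = upd s i (t i).
Proof.
  intros H. apply functional_extensionality. intro c. destruct (classic (c = i)) as [->|Hc].
  - rewrite upd_eq. auto.
  - rewrite upd_neq; auto.
Qed.

Lemma InA_cyl_half G X i r r' : (forall r r', ZR G r r' -> (X r <-> X r')) -> ZR (i :: G) r r' ->
  set_cyl i X r -> set_cyl i X r'.
Proof.
  intros HX [C1r [C1r' HV]] [t [Ht Et]].
  rewrite (upd_self t i r Et) in Ht.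
  destruct (forth (i :: G) r r' i (t i) C1r' (or_introl eq_refl) HV) as [u' Hu'].
  exists (upd r' i u'). split.
  - apply (HX (upd r i (t i))); auto. split; [|split]; try apply C01_upd; auto.
    apply (V_mono G (i :: G)); auto. intros x Hx; right; auto.
  - intros j Hj. apply upd_neq; auto.
Qed.

Lemma InA_sub : subuniverse (fullCs I I) InA.
Proof.
  unfold subuniverse. split; [|split; [|split; [|split; [|split; [|split]]]]].
  - intros x y [G1 H1] [G2 H2]. exists (G1 ++ G2). intros r r' [A [B HV]]. simpl.
    rewrite (H1 r r'), (H2 r r'); [tauto| |]; split; auto; split; auto;
    eapply V_mono; eauto; intros z Hz; apply in_or_app; auto.
  - intros x y [G1 H1] [G2 H2]. exists (G1 ++ G2). intros r r' [A [B HV]]. simpl.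
    rewrite (H1 r r'), (H2 r r'); [tauto| |]; split; auto; split; auto;
    eapply V_mono; eauto; intros z Hz; apply in_or_app; auto.
  - intros x [G H]. exists G. intros r r' HZ. simpl. rewrite (H r r' HZ). tauto.
  - exists []. simpl. tauto.
  - exists []. simpl. tauto.
  - intros i x [G H]. exists (i :: G). intros r r' HZ. simpl. split.
    + apply InA_cyl_half with G; auto.
    + apply InA_cyl_half with G; auto. apply ZR_sym; auto.
  - intros i j. exists [i; j]. intros r r' [A [B [K _]]]. simpl. apply K; simpl; auto.
Qed.

Definition Inj01 (r : I -> I) := C01 r /\ injective r.

Lemma InA_Inj01 : InA Inj01.
Proof.
  exists []. intros r r' [A [B [_ [_ D]]]].
  assert (forall s, injective s <-> ~ Dup [] s) as E.
  { intros s. unfold Dup, injective. split.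
    - intros Hs [k1 [k2 [_ [_ [H12 E12]]]]]. apply H12. auto.
    - intros Hs x y Exy. apply NNPP. intro Hxy. apply Hs. exists x, y. repeat split; auto. }
  unfold Inj01. rewrite !E. tauto.
Qed.

Lemma realize (b : I -> I) (Hb : injective b) (r : I -> I) (G : list I) :
  exists r', Cls b r' /\ V G r r'.
Proof.
  pose (inh := inhabits (f 0)).
  pose (rep := fun a => epsilon inh (fun j => In j G /\ r j = r a)).
  pose (wit := fun a => epsilon inh (fun k => ~ In k G /\ r k = r a)).
  assert (rep_spec : forall a, In a G -> In (rep a) G /\ r (rep a) = r a).
  { intros a Ha. apply (epsilon_spec inh (fun j => In j G /\ r j = r a)). eauto. }
  assert (wit_spec : forall a, Out G r a -> ~ In (wit a) G /\ r (wit a) = r a).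
  { intros a [k Hk]. apply (epsilon_spec inh (fun k => ~ In k G /\ r k = r a)). eauto. }
  assert (rep_eq : forall a c, r a = r c -> rep a = rep c).
  { intros a c E. unfold rep. rewrite E. reflexivity. }
  assert (wit_eq : forall a c, r a = r c -> wit a = wit c).
  { intros a c E. unfold wit. rewrite E. reflexivity. }
  destruct (avoid (G ++ map wit G)) as [N1 HN1].
  pose (k1 := f N1).
  assert (Hk1 : ~ In k1 G /\ ~ In k1 (map wit G)).
  { split; intro; apply (HN1 N1); auto; apply in_or_app; auto. }
  destruct (avoid (k1 :: G)) as [N2 HN2].
  pose (k2 := f N2).
  assert (Hk2 : k2 <> k1 /\ ~ In k2 G).
  { split; intro; apply (HN2 N2); auto; [left|right]; auto. }
  pose (r' := fun k => if dec (In k G) then (if dec (Out G r k) then b (wit k) else b (rep k))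
                       else if dec (Dup G r /\ k = k1) then b k2 else b k).
  exists r'. split.
  { exists (k1 :: G). intros k Hk. unfold r'.
    destruct (dec (In k G)) as [|_]; [exfalso; apply Hk; right; auto|].
    destruct (dec (Dup G r /\ k = k1)) as [[_ E]|_]; auto. exfalso; apply Hk; left; auto. }
  assert (r'G : forall a, In a G -> r' a = if dec (Out G r a) then b (wit a) else b (rep a)).
  { intros a Ha. unfold r'. destruct (dec (In a G)); [auto|contradiction]. }
  assert (r'O : forall k, ~ In k G -> k <> k1 -> r' k = b k).
  { intros k Hk Hk'. unfold r'. destruct (dec (In k G)); [contradiction|].
    destruct (dec (Dup G r /\ k = k1)) as [[_ E]|]; [contradiction|auto]. }
  assert (r'k1 : ~ In k1 G -> r' k1 = if dec (Dup G r) then b k2 else b k1).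
  { intros Hk. unfold r'. destruct (dec (In k1 G)); [contradiction|].
    destruct (dec (Dup G r /\ k1 = k1)) as [[Hd _]|Hn]; destruct (dec (Dup G r)); auto; tauto. }
  assert (Oeq : forall a c, r a = r c -> (Out G r a <-> Out G r c)).
  { intros a c E. unfold Out. rewrite E. tauto. }
  split; [|split].
  - intros a c Ha Hc. rewrite !r'G by auto. split.
    + intros E. rewrite (wit_eq a c E), (rep_eq a c E).
      destruct (dec (Out G r a)) as [Oa|Oa]; destruct (dec (Out G r c)) as [Oc|Oc]; auto;
      exfalso; [apply Oc|apply Oa]; apply (Oeq a c E); auto.
    + destruct (dec (Out G r a)) as [Oa|Oa]; destruct (dec (Out G r c)) as [Oc|Oc]; intros E; apply Hb in E.
      * destruct (wit_spec a Oa) as [_ Ea]. destruct (wit_spec c Oc) as [_ Ec]. congruence.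
      * exfalso. destruct (wit_spec a Oa) as [Wa _]. destruct (rep_spec c Hc) as [Rc _]. rewrite E in Wa. auto.
      * exfalso. destruct (wit_spec c Oc) as [Wc _]. destruct (rep_spec a Ha) as [Ra _]. rewrite <- E in Wc. auto.
      * destruct (rep_spec a Ha) as [_ Ea]. destruct (rep_spec c Hc) as [_ Ec]. congruence.
  - intros a Ha. split.
    + intros Oa. destruct (wit_spec a Oa) as [Wa Ea]. exists (wit a). split; auto.
      rewrite (r'G a Ha). destruct (dec (Out G r a)); [|contradiction].
      apply r'O; auto. intro E. apply (proj2 Hk1). rewrite <- E. apply in_map; auto.
    + intros [k [Hk Ek]]. apply NNPP. intro Oa. rewrite (r'G a Ha) in Ek.
      destruct (dec (Out G r a)) as [|_]; [contradiction|].
      destruct (rep_spec a Ha) as [Ra _].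
      destruct (classic (k = k1)) as [->|Hkk].
      * rewrite r'k1 in Ek by auto. destruct (dec (Dup G r)); apply Hb in Ek.
        -- apply (proj2 Hk2). rewrite Ek. auto.
        -- apply Hk. rewrite Ek. auto.
      * rewrite r'O in Ek by auto. apply Hb in Ek. apply Hk. rewrite Ek. auto.
  - split.
    + intros Hd. exists k1, k2. repeat split; try apply Hk1; try apply Hk2.
      * intro E; apply (proj1 Hk2); auto.
      * rewrite r'k1 by apply Hk1. destruct (dec (Dup G r)); [|contradiction].
        rewrite r'O; auto; apply Hk2.
    + intros [x [y [Hx [Hy [Hxy Exy]]]]]. apply NNPP. intro Hd.
      assert (forall k, ~ In k G -> r' k = b k) as Hr.
      { intros k Hk. destruct (classic (k = k1)) as [->|Hkk].
        - rewrite r'k1 by auto. destruct (dec (Dup G r)); [contradiction|auto].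
        - apply r'O; auto. }
      rewrite !Hr in Exy by auto. apply Hb in Exy. contradiction.
Qed.

Lemma id_inj : injective (fun x : I => x).
Proof. intros x y E. exact E. Qed.

Lemma InA_C1_empty X : InA X -> (forall r, X r -> C1 r) -> forall r, ~ X r.
Proof.
  intros [G HX] HC r Hr.
  destruct (realize (fun x => x) id_inj r G) as [r' [H0 HV]].
  assert (X r') as Hr'.
  { apply (HX r r'); auto. split; [right; apply HC; auto|split; [left; auto|auto]]. }
  apply (C0_C1 r'); auto.
Qed.

Lemma InA_both X r : InA X -> X r -> C01 r ->
  (exists r0, X r0 /\ C0 r0) /\ (exists r1, X r1 /\ C1 r1).
Proof.
  intros [G HX] Hr HC. split.
  - destruct (realize (fun x => x) id_inj r G) as [r' [H0 HV]]. exists r'. split; auto.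
    apply (HX r r'); auto. split; [auto|split; [left; auto|auto]].
  - destruct (realize h h_inj r G) as [r' [H0 HV]]. exists r'. split; auto.
    apply (HX r r'); auto. split; [auto|split; [right; auto|auto]].
Qed.

Definition Good M (r : I -> I) := r (f (S M)) = r (f M) /\ r (f (S (S M))) = r (f M).

Lemma in_map_seq n B : n < B -> In (f n) (map f (seq 0 B)).
Proof. intros. apply in_map. apply in_seq. lia. Qed.

Lemma C0_tau_C1 M r : C0 r -> C1 (fun k => r (tau M k)).
Proof.
  intros [L HL]. destruct (avoid L) as [K0 HK0].
  exists (L ++ map f (seq 0 (M + K0))). intros k Hk.
  destruct (f_cases k) as [[n <-]|Hn].
  - assert (M + K0 <= n) as Hn.
    { destruct (le_lt_dec (M + K0) n); auto. exfalso. apply Hk. apply in_or_app. right. apply in_map_seq. auto. }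
    rewrite tau_f_ge by lia. rewrite h_f. apply HL. apply HK0. lia.
  - rewrite tau_notf, h_notf by auto. apply HL. intro; apply Hk; apply in_or_app; auto.
Qed.

Lemma leaf_tau G M r : (forall n, M <= n -> ~ In (f n) G) -> C0 r -> Good M r ->
  ZR G r (fun k => r (tau M k)).
Proof.
  intros HG HC [G1 G2].
  assert (fixG : forall a, In a G -> tau M a = a).
  { intros a Ha. destruct (f_cases a) as [[n <-]|Hn].
    - destruct (le_lt_dec M n). + exfalso; eapply HG; eauto. + apply tau_f_lt; auto.
    - apply tau_notf; auto. }
  assert (outG : forall k, ~ In k G -> ~ In (tau M k) G).
  { intros k Hk. destruct (f_cases k) as [[n <-]|Hn].
    - destruct (le_lt_dec M n). + rewrite tau_f_ge by auto. apply HG. lia. + rewrite tau_f_lt; auto.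
    - rewrite tau_notf; auto. }
  assert (HfM : forall n, M <= n -> ~ In (f n) G) by auto.
  split; [left; auto|split; [right; apply C0_tau_C1; auto|]].
  split; [|split].
  - intros a b Ha Hb. rewrite !fixG by auto. tauto.
  - intros a Ha. unfold Out. rewrite (fixG a Ha). split.
    + intros [k [Hk Ek]]. destruct (f_cases k) as [[n <-]|Hn].
      * destruct (lt_eq_lt_dec n M) as [[Hl|He]|Hg].
        -- exists (f n). split; auto. rewrite tau_f_lt; auto.
        -- subst n. exists (f M). split; auto. rewrite tau_f_ge by lia. congruence.
        -- exists (f (pred n)). split; [apply HG; lia|]. rewrite tau_f_ge by lia.
           replace (S (pred n)) with n by lia. auto.
      * exists k. split; auto. rewrite tau_notf; auto.
    + intros [k [Hk Ek]]. exists (tau M k). split; auto.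
  - unfold Dup. split; intros _.
    + exists (f M), (f (S M)). repeat split; try (apply HG; lia).
      * intro E; apply Hf in E; lia.
      * rewrite !tau_f_ge by lia. congruence.
    + exists (f M), (f (S M)). repeat split; try (apply HG; lia).
      * intro E; apply Hf in E; lia.
      * congruence.
Qed.

Definition g (i : I) : I := match finv i with Some n => f (if Nat.even n then S n else pred n) | None => i end.

Lemma g_f n : g (f n) = f (if Nat.even n then S n else pred n).
Proof. unfold g. rewrite finv_f. auto. Qed.
Lemma g_notf i : (forall n, f n <> i) -> g i = i.
Proof. intros H. unfold g. destruct (finv i) eqn:E; auto. apply finv_Some in E. exfalso; eapply H; eauto. Qed.

Lemma g_g i : g (g i) = i.
Proof.
  destruct (f_cases i) as [[n <-]|Hn].
  - rewrite !g_f. f_equal. destruct (Nat.even n) eqn:E.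
    + rewrite Nat.even_succ, <- Nat.negb_even, E. simpl. auto.
    + destruct n; [simpl in E; discriminate|]. simpl pred.
      rewrite Nat.even_succ, <- Nat.negb_even in E. destruct (Nat.even n); simpl in E; [|discriminate]. auto.
  - rewrite (g_notf i Hn). apply g_notf. auto.
Qed.
Lemma g_inj : injective g.
Proof. intros x y E. rewrite <- (g_g x), <- (g_g y), E. auto. Qed.

Lemma g_f_neq m : g (f m) <> f m.
Proof.
  rewrite g_f. intro E. apply Hf in E. destruct (Nat.even m) eqn:Ev; [lia|].
  destruct m; [simpl in Ev; discriminate|]. simpl in E. lia.
Qed.

Lemma g_C1 r : C1 r -> ~ C01 (fun k => g (r k)).
Proof.
  intros [L2 H2] [[L1 H1]|[L1 H1]].
  - destruct (avoid (L1 ++ L2)) as [N HN].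
    assert (A : forall n, N <= n -> ~ In (f n) L1 /\ ~ In (f n) L2).
    { intros n Hn. split; intro; apply (HN n Hn); apply in_or_app; auto. }
    pose (n := S (2 * N)).
    destruct (A n) as [A1 A2]; [unfold n; lia|].
    specialize (H1 _ A1). rewrite H2, h_f, g_f in H1 by auto.
    assert (Nat.even (S n) = true) as Ev.
    { unfold n. rewrite Nat.even_succ_succ. apply Nat.even_spec. exists N. lia. }
    rewrite Ev in H1. apply Hf in H1. lia.
  - destruct (avoid (L1 ++ L2)) as [N HN].
    assert (A : ~ In (f N) L1 /\ ~ In (f N) L2).
    { split; intro; apply (HN N (le_n _)); apply in_or_app; auto. }
    destruct A as [A1 A2]. specialize (H1 _ A1). rewrite H2, h_f in H1 by auto.
    apply (g_f_neq (S N)). auto.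
Qed.

Definition Psi (r : I -> I) : I -> I := if dec (C1 r) then (fun k => g (r k)) else r.

Lemma Cls_near b r t i : (forall j, j <> i -> t j = r j) -> Cls b r -> Cls b t.
Proof. intros H Hc. apply (Cls_fin b r t [i]); auto. intros k Hk. apply H. intro; apply Hk; left; auto. Qed.

Definition rho (X : (I -> I) -> Prop) : (I -> I) -> Prop := fun r => X (Psi r).

Lemma rho_hom : hom (fullCs I I) (fullCs I I) rho.
Proof.
  unfold hom, hom_r. repeat split; intros; try reflexivity.
  - apply functional_extensionality; intro r. unfold rho; simpl. apply propositional_extensionality.
    unfold set_cyl. unfold Psi at 1. destruct (dec (C1 r)) as [Hr|Hr]; split.
    + intros [t [Ht Et]]. exists (fun k => g (t k)).
      assert (C1 (fun k => g (t k))) as Hc.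
      { apply (Cls_near h r _ i); auto. intros j Hj. rewrite Et; auto. apply g_g. }
      split.
      * unfold Psi. destruct (dec (C1 (fun k => g (t k)))) as [_|Hn]; [|contradiction].
        replace (fun k => g (g (t k))) with t; auto. apply functional_extensionality; intro; rewrite g_g; auto.
      * intros j Hj. rewrite Et; auto. apply g_g.
    + intros [t [Ht Et]].
      assert (C1 t) as Hc by (apply (Cls_near h r t i); auto).
      unfold Psi in Ht. destruct (dec (C1 t)) as [_|Hn]; [|contradiction].
      exists (fun k => g (t k)). split; auto. intros j Hj. rewrite Et; auto.
    + intros [t [Ht Et]]. exists t. split; auto. unfold Psi.
      destruct (dec (C1 t)) as [Hc|Hc]; auto. exfalso. apply Hr. apply (Cls_near h t r i); auto.
      intros j Hj. rewrite Et; auto.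
    + intros [t [Ht Et]]. exists t. split; auto. unfold Psi in Ht.
      destruct (dec (C1 t)) as [Hc|Hc]; auto. exfalso. apply Hr. apply (Cls_near h t r i); auto.
      intros j Hj. rewrite Et; auto.
  - apply functional_extensionality; intro r. unfold rho, Psi; simpl. apply propositional_extensionality.
    destruct (dec (C1 r)); split; intros E; auto; [apply g_inj; auto|rewrite E; auto].
Qed.

Lemma InA_iff X Y : InA X -> InA Y -> InA (fun r => ~ (X r <-> Y r)).
Proof.
  intros [G1 H1] [G2 H2]. exists (G1 ++ G2). intros r r' [A [B HV]].
  rewrite (H1 r r'), (H2 r r'); [tauto| |]; split; auto; split; auto;
  eapply V_mono; eauto; intros z Hz; apply in_or_app; auto.
Qed.

Lemma rho_inj X Y : InA X -> InA Y -> rho X = rho Y -> X = Y.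
Proof.
  intros HX HY E.
  assert (forall r, ~ ~ (X r <-> Y r)) as K.
  { intros r Hn. apply (InA_C1_empty _ (InA_iff X Y HX HY)) with r; auto.
    intros r' Hr'. apply NNPP. intro Hc. apply Hr'.
    assert (rho X r' <-> rho Y r') as Q by (rewrite E; tauto).
    unfold rho, Psi in Q. destruct (dec (C1 r')); [contradiction|auto]. }
  apply functional_extensionality; intro r. apply propositional_extensionality. apply NNPP. apply K.
Qed.

Lemma perm_upd_not_inj r i0 u : C0 r -> injective r -> u <> r i0 -> ~ injective (upd r i0 u).
Proof.
  intros HC Hr Hu Hi. destruct (C0_inj_surj r HC Hr u) as [k Ek].
  assert (k <> i0) as Hk by (intro; subst; auto).
  assert (upd r i0 u i0 = upd r i0 u k) as E by (rewrite upd_eq, upd_neq; auto).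
  apply Hi in E. auto.
Qed.

Definition Inj1 r := Inj01 r /\ C1 r.
Definition Perm0 r := Inj01 r /\ ~ C1 r.

Lemma spare_Inj01 r i0 : Inj01 r -> (exists u, u <> r i0 /\ Inj01 (upd r i0 u)) <-> C1 r.
Proof.
  intros [HC Hr]. split.
  - intros [u [Hu [HC' Hr']]]. destruct HC as [H0|H1]; auto.
    exfalso. apply (perm_upd_not_inj r i0 u); auto.
  - intros H1. destruct (missing r (or_introl H1)) as [v Hv]. exists v. split; [apply not_eq_sym; auto|].
    split; [apply C01_upd; auto|]. intros a b E.
    destruct (classic (a = i0)) as [->|Ha]; destruct (classic (b = i0)) as [->|Hb]; auto.
    + rewrite upd_eq, upd_neq in E by auto. exfalso; eapply Hv; eauto.
    + rewrite upd_eq, upd_neq in E by auto. exfalso; eapply Hv; eauto.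
    + rewrite !upd_neq in E by auto. auto.
Qed.

Lemma spare_rho r i0 : ~ (rho Inj01 r /\ exists u, u <> r i0 /\ rho Inj01 (upd r i0 u)).
Proof.
  unfold rho, Psi. intros [H [u [Hu H']]].
  destruct (dec (C1 r)) as [Hr|Hr].
  - destruct H as [Hc _]. apply (g_C1 r); auto.
  - destruct (dec (C1 (upd r i0 u))) as [Hr'|Hr'].
    + apply Hr. apply (Cls_near h (upd r i0 u) r i0); auto. intros j Hj. rewrite upd_neq; auto.
    + destruct H as [[H0|H1] Hi]; [|contradiction].
      destruct H' as [_ Hi']. apply (perm_upd_not_inj r i0 u); auto.
Qed.

End Core.


Section Main.
Variable I : Type.
Variable f : nat -> I.
Hypothesis Hf : injective f.

Definition e (X : (I -> I) -> Prop) : (I + nat -> I) -> Prop := fun s => X (fun i => s (inl i)).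

Lemma e_hom : hom_r inl (fullCs I I) (fullCs (I + nat) I) e.
Proof.
  unfold hom_r. repeat split; intros; try reflexivity.
  apply functional_extensionality; intro s. apply propositional_extensionality. unfold e; simpl.
  unfold set_cyl. split.
  - intros [t [Ht Et]]. exists (fun c => match c with inl j => t j | inr n => s (inr n) end).
    split; auto. intros [j|n] Hj; auto. apply Et. intro; subst; auto.
  - intros [t [Ht Et]]. exists (fun j => t (inl j)). split; auto. intros j Hj. apply Et. congruence.
Qed.

Lemma e_cyl_inr X n : set_cyl (inr n) (e X) = e X.
Proof.
  apply functional_extensionality; intro s. apply propositional_extensionality. unfold e, set_cyl. split.
  - intros [t [Ht Et]]. replace (fun i => s (inl i)) with (fun i => t (inl i)); auto.
    apply functional_extensionality; intro j. apply Et. discriminate.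
  - intros H. exists s. auto.
Qed.

Definition lift (r : I -> I) : I + nat -> I := fun c => match c with inl i => r i | inr _ => r (f 0) end.

Lemma e_inj X Y : e X = e Y -> X = Y.
Proof.
  intros E. apply functional_extensionality; intro r.
  exact (f_equal (fun F => F (lift r)) E).
Qed.

Definition A : CAType I := SubCA (fullCs I I) (InA I f) (InA_sub I f Hf).
Definition Gsrc : ((I + nat -> I) -> Prop) -> Prop := fun b => exists x : A, e (sval _ _ _ x) = b.
Definition B : CAType (I + nat) := SgCA Gsrc.
Definition sB := sval (fullCs (I + nat) I) (Gen Gsrc) (Gen_sub Gsrc).
Definition sA := sval (fullCs I I) (InA I f) (InA_sub I f Hf).

Definition eA (x : A) : B := smk (fullCs (I + nat) I) (Gen Gsrc) (Gen_sub Gsrc) (e (sA x)) (g_base _ _ (ex_intro _ x eq_refl)).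

Lemma sB_eA x : sB (eA x) = e (sA x). Proof. reflexivity. Qed.

Lemma embeds_gen (G' : ((I + nat -> I) -> Prop) -> Prop) (D : CAType I) (sD : D -> (I -> I) -> Prop)
  (m : ((I -> I) -> Prop) -> ((I -> I) -> Prop))
  (Hm : hom (fullCs I I) (fullCs I I) m)
  (HsD : hom_r (fun i => i) D (fullCs I I) sD)
  (Hinj : forall x y, m (sD x) = m (sD y) -> x = y)
  (emb : D -> SgCA G') (Hemb : forall x, sval _ _ _ (emb x) = e (m (sD x))) :
  embeds_Nr D (SgCA G') emb.
Proof.
  destruct HsD as [Dj [Dm [Dc [D0 [D1 [Dcy Dd]]]]]].
  destruct Hm as [Mj [Mm [Mc [M0 [M1 [Mcy Md]]]]]].
  destruct e_hom as [Ej [Em [Ec [E0 [E1 [Ecy Ed]]]]]].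
  split; [|split].
  - unfold hom_r. repeat split; intros; apply sval_inj; unfold SgCA; rewrite Hemb;
      rewrite ?sval_join, ?sval_meet, ?sval_compl, ?sval_zero, ?sval_one, ?sval_cyl, ?sval_diag, ?Hemb.
    + rewrite Dj, Mj, Ej. reflexivity.
    + rewrite Dm, Mm, Em. reflexivity.
    + rewrite Dc, Mc, Ec. reflexivity.
    + rewrite D0, M0, E0. reflexivity.
    + rewrite D1, M1, E1. reflexivity.
    + rewrite Dcy, Mcy, Ecy. reflexivity.
    + rewrite Dd, Md, Ed. reflexivity.
  - intros x y E. apply Hinj. apply e_inj. rewrite <- !Hemb. rewrite E. auto.
  - intros x n. apply sval_inj. unfold SgCA. rewrite sval_cyl, Hemb. apply e_cyl_inr.
Qed.

Lemma id_hom : hom (fullCs I I) (fullCs I I) (fun X => X).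
Proof. unfold hom, hom_r. repeat split; intros; reflexivity. Qed.

Lemma sA_hom : hom_r (fun i => i) A (fullCs I I) sA.
Proof. apply sval_hom. Qed.

Lemma eA_gen : gen_subreduct A B eA.
Proof.
  split.
  - apply (embeds_gen Gsrc A sA (fun X => X) id_hom sA_hom); [|intros; reflexivity].
    intros x y E. apply sval_inj. exact E.
  - apply Sg_generates. intros b [x <-]. exists (eA x). split; eauto.
Qed.

Definition ty {G' : ((I + nat -> I) -> Prop) -> Prop} (z : SgCA G') : SgCA G' :=
  meet _ z (cyl _ (inr 0) (meet _ (diag _ (inr 0) (inl (f 0)))
     (cyl _ (inl (f 0)) (meet _ (compl _ (diag _ (inl (f 0)) (inr 0))) z)))).

Lemma sval_ty G' (z : SgCA G') s :
  sval _ _ _ (ty z) s <-> sval _ _ _ z s /\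
     exists u, u <> s (inl (f 0)) /\ sval _ _ _ z (upd (upd s (inr 0) (s (inl (f 0)))) (inl (f 0)) u).
Proof.
  unfold ty, SgCA. rewrite sval_meet, sval_cyl, sval_meet, sval_diag, sval_cyl, sval_meet, sval_compl, sval_diag.
  simpl. unfold set_cyl.
  assert (Hne : inl (f 0) <> (inr 0 : I + nat)) by discriminate.
  split.
  - intros [Hz [t1 [[E1 [t2 [[N2 Z2] E2]]] E1']]]. split; auto.
    exists (t2 (inl (f 0))). split.
    + intro E. apply N2. rewrite E, E2 by auto. rewrite E1, E1'; auto.
    + replace (upd (upd s (inr 0) (s (inl (f 0)))) (inl (f 0)) (t2 (inl (f 0)))) with t2; auto.
      apply functional_extensionality. intro c.
      destruct (classic (c = inl (f 0))) as [->|Hc]; [rewrite upd_eq; auto|].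
      rewrite upd_neq by auto. destruct (classic (c = inr 0)) as [->|Hc'].
      * rewrite upd_eq, E2 by auto. rewrite E1, E1'; auto.
      * rewrite upd_neq, E2, E1' by auto. auto.
  - intros [Hz [u [Hu Zu]]]. split; auto.
    exists (upd s (inr 0) (s (inl (f 0)))). split.
    + split.
      * rewrite upd_eq, upd_neq by auto. auto.
      * exists (upd (upd s (inr 0) (s (inl (f 0)))) (inl (f 0)) u). split.
        -- split; auto. rewrite upd_eq, upd_neq, upd_eq by auto. auto.
        -- intros c Hc. apply upd_neq; auto.
    + intros c Hc. apply upd_neq; auto.
Qed.

Lemma comp_inl_upd (s : I + nat -> I) v j u :
  (fun i => upd (upd s (inr 0) v) (inl j) u (inl i)) = upd (fun i => s (inl i)) j u.
Proof.
  apply functional_extensionality. intro i. destruct (classic (i = j)) as [->|H].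
  - rewrite !upd_eq. auto.
  - rewrite !upd_neq by (auto; congruence || discriminate). auto.
Qed.

Definition x01 : A := smk (fullCs I I) (InA I f) (InA_sub I f Hf) (Inj01 I f) (InA_Inj01 I f).

Lemma ty_eA_Inj s : sB (ty (eA x01)) s <-> Inj1 I f (fun i => s (inl i)).
Proof.
  unfold sB. rewrite sval_ty. unfold eA. rewrite !sval_smk. unfold e, x01, sA. rewrite !sval_smk.
  setoid_rewrite comp_inl_upd. unfold Inj1. split.
  - intros [H1 H2]. split; auto. apply (spare_Inj01 I f Hf _ (f 0) H1). auto.
  - intros [H1 H2]. split; auto. apply (spare_Inj01 I f Hf _ (f 0) H1). auto.
Qed.

Definition lift2 (r : I -> I) : I + nat -> I := fun c => match c with inl i => r i | inr _ => r (f 0) end.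

Lemma h_Inj1 : Inj1 I f (h I f).
Proof.
  split; [split|].
  - right. exists []. auto.
  - apply h_inj; auto.
  - exists []. auto.
Qed.

Lemma y_nonzero : ty (eA x01) <> zero B.
Proof.
  intros E. assert (sB (ty (eA x01)) (lift2 (h I f))) as H.
  { apply ty_eA_Inj. apply h_Inj1. }
  rewrite E in H. exact H.
Qed.

Definition Jii (b : B) : Prop := forall s, sB b s -> C1 I f (fun i => s (inl i)).

Lemma Jii_ideal : is_ideal B Jii.
Proof.
  unfold is_ideal, Jii, sB. split; [|split; [|split]].
  - intros s [].
  - intros x y Hx Hy s Hs. unfold B, SgCA in Hs. rewrite sval_join in Hs. destruct Hs as [Hs|Hs]; auto.
  - intros x y Hxy Hy s Hs. unfold leq in Hxy. rewrite <- Hxy in Hs. unfold B, SgCA in Hs.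
    rewrite sval_meet in Hs. apply Hy. apply Hs.
  - intros i x Hx s Hs. unfold B, SgCA in Hs. rewrite sval_cyl in Hs. destruct Hs as [t [Ht Et]].
    apply Hx in Ht. apply (Cls_near I (h I f) (fun i => t (inl i)) _ (match i with inl j => j | inr _ => f 0 end)); auto.
    intros j Hj. symmetry. apply Et. destruct i; [intro E; injection E; auto|discriminate].
Qed.

Lemma zero_ideal : is_ideal B (fun b => b = zero B).
Proof.
  unfold is_ideal. split; [|split; [|split]]; intros.
  - auto.
  - subst. apply sval_inj. unfold B, SgCA. rewrite sval_join, sval_zero. simpl.
    apply functional_extensionality; intro; apply propositional_extensionality; tauto.
  - subst. unfold leq in H. rewrite <- H. apply sval_inj. unfold B, SgCA. rewrite sval_meet, sval_zero. simpl.
    apply functional_extensionality; intro; apply propositional_extensionality; tauto.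
  - subst. apply sval_inj. unfold B, SgCA. rewrite sval_cyl, sval_zero. simpl.
    apply functional_extensionality; intro; apply propositional_extensionality. unfold set_cyl.
    split; [intros [t [[] _]]|contradiction].
Qed.

Lemma part_ii : ~ (forall b, Ig B (fun x => Jii x /\ exists a, eA a = x) b <-> Jii b).
Proof.
  intros H. apply y_nonzero.
  assert (Jii (ty (eA x01))) as Hy.
  { intros s Hs. apply ty_eA_Inj in Hs. apply Hs. }
  apply H in Hy. apply (Hy (fun b => b = zero B) zero_ideal).
  intros x [Hx [a <-]]. apply sval_inj.
  assert (forall r, sA a r -> C1 I f r) as Ha.
  { intros r Hr. apply (Hx (lift2 r)). exact Hr. }
  pose proof (InA_C1_empty I f Hf (sA a) (sval_P _ _ _ a) Ha) as E.
  apply functional_extensionality; intro s. apply propositional_extensionality.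
  unfold B, SgCA. rewrite sval_zero. simpl. split; [|contradiction]. intros Hs. eapply E. exact Hs.
Qed.

Definition Gsrc' : ((I + nat -> I) -> Prop) -> Prop := fun b => exists x : A, e (rho I f (sA x)) = b.
Definition B' : CAType (I + nat) := SgCA Gsrc'.
Definition eA' (x : A) : B' := smk (fullCs (I + nat) I) (Gen Gsrc') (Gen_sub Gsrc') (e (rho I f (sA x)))
   (g_base _ _ (ex_intro _ x eq_refl)).

Lemma eA'_gen : gen_subreduct A B' eA'.
Proof.
  split.
  - apply (embeds_gen Gsrc' A sA (rho I f) (rho_hom I f Hf) sA_hom); [|intros; reflexivity].
    intros x y E. apply sval_inj. apply (rho_inj I f Hf); auto; apply sval_P.
  - apply Sg_generates. intros b [x <-]. exists (eA' x). split; eauto.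
Qed.

Lemma hom_ty G1 G2 (ib : SgCA G1 -> SgCA G2) : hom (SgCA G1) (SgCA G2) ib -> forall z, ib (ty z) = ty (ib z).
Proof.
  intros [Hj [Hm [Hc [H0 [H1 [Hcy Hd]]]]]] z. unfold ty.
  rewrite Hm, Hcy, Hm, Hd, Hcy, Hm, Hc, Hd. reflexivity.
Qed.

Lemma ty_eA'_zero : ty (eA' x01) = zero B'.
Proof.
  apply sval_inj. apply functional_extensionality; intro s. apply propositional_extensionality.
  unfold B', SgCA. rewrite sval_zero. split; [|simpl; contradiction].
  intros Hs. apply sval_ty in Hs. unfold eA' in Hs. rewrite !sval_smk in Hs.
  unfold e at 1 2 in Hs. setoid_rewrite comp_inl_upd in Hs.
  apply (spare_rho I f Hf (fun i => s (inl i)) (f 0)). exact Hs.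
Qed.

Lemma iso_id (D : CAType I) : iso D D (fun x => x).
Proof.
  split; [|split].
  - unfold hom, hom_r. repeat split; intros; reflexivity.
  - intros x y E. exact E.
  - intros y. exists y. reflexivity.
Qed.

Lemma part_iii : ~ exists ib : B -> B', iso B B' ib /\ forall a, ib (eA a) = eA' ((fun x => x) a).
Proof.
  intros [ib [[Hib [Hinj _]] Hc]]. apply y_nonzero. apply Hinj.
  rewrite (hom_ty Gsrc Gsrc' ib Hib), Hc, ty_eA'_zero.
  destruct Hib as [_ [_ [_ [H0 _]]]]. rewrite H0. reflexivity.
Qed.

Definition P2 (X : (I -> I) -> Prop) : Prop := Gen Gsrc (e X).

Lemma P2_sub : subuniverse (fullCs I I) P2.
Proof.
  unfold subuniverse, P2. split; [|split; [|split; [|split; [|split; [|split]]]]].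
  - intros x y Hx Hy. exact (g_join _ _ _ Hx Hy).
  - intros x y Hx Hy. exact (g_meet _ _ _ Hx Hy).
  - intros x Hx. exact (g_compl _ _ Hx).
  - exact (g_zero _).
  - exact (g_one _).
  - intros i x Hx. destruct e_hom as [_ [_ [_ [_ [_ [Ecy _]]]]]]. rewrite Ecy. exact (g_cyl _ _ _ Hx).
  - intros i j. exact (g_diag _ (inl i) (inl j)).
Qed.

Definition A2 : CAType I := SubCA (fullCs I I) P2 P2_sub.
Definition sA2 := sval (fullCs I I) P2 P2_sub.
Definition e2 (x : A2) : B := smk (fullCs (I + nat) I) (Gen Gsrc) (Gen_sub Gsrc) (e (sA2 x)) (sval_P _ _ _ x).

Lemma e2_gen : gen_subreduct A2 B e2.
Proof.
  split.
  - apply (embeds_gen Gsrc A2 sA2 (fun X => X) id_hom (sval_hom _ _ _)); [|intros; reflexivity].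
    intros x y E. apply sval_inj. exact E.
  - apply Sg_generates. intros b [x <-].
    exists (e2 (smk (fullCs I I) P2 P2_sub (sA x) (g_base _ _ (ex_intro _ x eq_refl)))). split; eauto.
Qed.

Definition cylL {T} (D : CAType T) (L : list T) (x : D) : D := fold_right (fun i y => cyl D i y) x L.

Definition Pi {T} (D : CAType T) : Prop :=
  forall w1 w2 : D, w1 <> zero D -> w2 <> zero D ->
    (forall L, meet D (cylL D L w1) (cylL D L w2) = zero D) ->
    exists z, (forall i, cyl D i z = z) /\ leq D w1 z /\ meet D w2 z = zero D.

Lemma Pi_iso {T} (D D' : CAType T) (phi : D -> D') : iso D D' phi -> Pi D -> Pi D'.
Proof.
  intros [[Hj [Hm [Hc [H0 [H1 [Hcy Hd]]]]]] [Hinj Hsur]] HP w1' w2' N1 N2 Sep.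
  destruct (Hsur w1') as [w1 <-]. destruct (Hsur w2') as [w2 <-].
  assert (HL : forall L x, phi (cylL D L x) = cylL D' L (phi x)).
  { induction L; intros; simpl; auto. rewrite Hcy, IHL. auto. }
  destruct (HP w1 w2) as [z [Z1 [Z2 Z3]]].
  - intro E; apply N1; rewrite E; auto.
  - intro E; apply N2; rewrite E; auto.
  - intros L. apply Hinj. rewrite Hm, !HL, H0. apply Sep.
  - exists (phi z). split; [|split].
    + intros i. rewrite <- Hcy, Z1. auto.
    + unfold leq in *. rewrite <- Hm, Z2. auto.
    + rewrite <- Hm, Z3. auto.
Qed.

Definition cylLs {T U} (L : list T) (X : (T -> U) -> Prop) : (T -> U) -> Prop :=
  fold_right (fun i Y => set_cyl i Y) X L.

Lemma sval_cylL {T U} (P : fullCs T U -> Prop) (H : subuniverse (fullCs T U) P) (L : list T) (x : SubCA (fullCs T U) P H) :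
  sval (fullCs T U) P H (cylL (SubCA (fullCs T U) P H) L x) = cylLs L (sval _ _ _ x).
Proof.
  induction L as [|a L IH]; [reflexivity|].
  change (sval _ _ _ (cyl (SubCA (fullCs T U) P H) a (cylL _ L x)) = set_cyl a (cylLs L (sval _ _ _ x))).
  rewrite sval_cyl, IH. reflexivity.
Qed.

Lemma cylLs_near {T U} (L : list T) (X : (T -> U) -> Prop) p q :
  X p -> (forall k, ~ In k L -> q k = p k) -> cylLs L X q.
Proof.
  revert q. induction L as [|x L IH]; intros q Hp Hq; simpl.
  - replace q with p; auto. apply functional_extensionality; intro k. symmetry. apply Hq. auto.
  - exists (upd q x (p x)). split.
    + apply IH; auto. intros k Hk. destruct (classic (k = x)) as [->|Hkx].
      * apply upd_eq.
      * rewrite upd_neq; auto. apply Hq. intros [E|E]; auto.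
    + intros j Hj. apply upd_neq; auto.
Qed.

Lemma cylLs_Cls (L : list I) (X : (I -> I) -> Prop) b r :
  (forall p, X p -> Cls I b p) -> cylLs L X r -> Cls I b r.
Proof.
  revert r. induction L as [|x L IH]; intros r HX Hr; simpl in *; auto.
  destruct Hr as [t [Ht Et]]. apply (Cls_near I b t r x); [intros j Hj; symmetry; auto|apply IH; auto].
Qed.

Lemma fin_closed (Z : (I -> I) -> Prop) :
  (forall r i u, Z r -> Z (upd r i u)) -> forall L p q, Z p -> (forall k, ~ In k L -> q k = p k) -> Z q.
Proof.
  intros HZ L. induction L as [|x L IH]; intros p q Hp Hq.
  - replace q with p; auto. apply functional_extensionality; intro k. symmetry. apply Hq. auto.
  - apply (IH (upd p x (q x))); auto. intros k Hk. destruct (classic (k = x)) as [->|Hkx].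
    + rewrite upd_eq. auto.
    + rewrite upd_neq; auto. apply Hq. intros [E|E]; auto.
Qed.

Lemma Cls_agree b r r' : Cls I b r -> Cls I b r' -> exists L, forall k, ~ In k L -> r' k = r k.
Proof.
  intros [L1 H1] [L2 H2]. exists (L1 ++ L2). intros k Hk. rewrite H1, H2; auto;
  intro; apply Hk; apply in_or_app; auto.
Qed.

Lemma Pi_A : Pi A.
Proof.
  intros w1 w2 N1 N2 Sep.
  assert (Hne : exists p, sA w1 p).
  { apply NNPP. intro Hn. apply N1. apply sval_inj. apply functional_extensionality; intro r.
    apply propositional_extensionality. unfold A. rewrite sval_zero. simpl. split; [|contradiction].
    intros Hr. apply Hn. eauto. }
  pose (Z := fun r => exists p L, sA w1 p /\ forall k, ~ In k L -> r k = p k).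
  assert (ZA : InA I f Z).
  { exists []. assert (forall r r', ZR I f [] r r' -> Z r -> Z r') as K.
    { intros r r' [Cr [Cr' _]] [p [L [Hp Ep]]].
      assert (C01 I f p) as Cp.
      { destruct Cr as [Cr|Cr]; [left|right]; apply (Cls_fin I _ r p L); auto;
        intros k Hk; symmetry; auto. }
      destruct (InA_both I f Hf (sA w1) p (sval_P _ _ _ w1) Hp Cp) as [[r0 [X0 C0r]] [r1 [X1 C1r]]].
      destruct Cr' as [Cr'|Cr'].
      - destruct (Cls_agree _ _ _ C0r Cr') as [L' HL']. exists r0, L'. auto.
      - destruct (Cls_agree _ _ _ C1r Cr') as [L' HL']. exists r1, L'. auto. }
    intros r r' HZ. split; apply K; auto. apply ZR_sym; auto. }
  exists (smk (fullCs I I) (InA I f) (InA_sub I f Hf) Z ZA). split; [|split].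
  - intros i. apply sval_inj. unfold A. rewrite sval_cyl, sval_smk. simpl.
    apply functional_extensionality; intro r. apply propositional_extensionality. unfold set_cyl. split.
    + intros [t [[p [L [Hp Ep]]] Et]]. exists p, (i :: L). split; auto. intros k Hk.
      rewrite <- Et by (intro; apply Hk; left; auto). apply Ep. intro; apply Hk; right; auto.
    + intros HZ. exists r. split; auto.
  - unfold leq. apply sval_inj. unfold A. rewrite sval_meet, sval_smk. simpl.
    apply functional_extensionality; intro r. apply propositional_extensionality. split; [tauto|].
    intros Hr. split; auto. exists r, []. auto.
  - apply sval_inj. unfold A. rewrite sval_meet, sval_smk, sval_zero. simpl.
    apply functional_extensionality; intro r. apply propositional_extensionality. split; [|contradiction].
    intros [Hr [p [L [Hp Ep]]]].
    specialize (Sep L). apply (f_equal sA) in Sep. unfold sA, A in Sep.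
    rewrite sval_meet, !sval_cylL, sval_zero in Sep.
    assert (cylLs L (sA w1) r /\ cylLs L (sA w2) r) as K.
    { split; [apply (cylLs_near L _ p r); auto|apply (cylLs_near L _ r r); auto]. }
    pose proof (f_equal (fun F => F r) Sep) as E. simpl in E. rewrite <- E. exact K.
Qed.

Definition tauh M (c : I + nat) : I + nat := match c with inl i => inl (tau I f M i) | inr n => inr n end.
Definition idx (c : I + nat) : nat :=
  match c with inl i => match finv I f i with Some n => S n | None => 0 end | inr _ => 0 end.

Lemma tauh_fix M c : idx c <= M -> tauh M c = c.
Proof.
  destruct c as [i|n]; simpl; auto. intros H. f_equal.
  destruct (f_cases I f i) as [[n <-]|Hn].
  - rewrite (finv_f I f Hf) in H. apply (tau_f_lt I f Hf); lia.
  - apply tau_notf; auto.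
Qed.

Lemma tauh_pre M c d : idx c <= M -> tauh M d = c -> d = c.
Proof.
  intros Hc E. destruct d as [j|n]; destruct c as [i|m]; simpl in *; try discriminate; auto.
  injection E as E. f_equal.
  destruct (f_cases I f j) as [[n <-]|Hn].
  - destruct (le_lt_dec M n).
    + rewrite (tau_f_ge I f Hf) in E by auto. subst. rewrite (finv_f I f Hf) in Hc. lia.
    + rewrite (tau_f_lt I f Hf) in E by auto. auto.
  - rewrite tau_notf in E; auto.
Qed.

Lemma upd_tauh M (s : I + nat -> I) c u : idx c <= M ->
  (fun d => upd s c u (tauh M d)) = upd (fun d => s (tauh M d)) c u.
Proof.
  intros Hc. apply functional_extensionality; intro d. destruct (classic (d = c)) as [->|Hd].
  - rewrite tauh_fix, !upd_eq; auto.
  - rewrite !upd_neq; auto. intro E. apply Hd. apply (tauh_pre M c d); auto.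
Qed.

Lemma Cls_inl_upd b (s : I + nat -> I) c u :
  Cls I b (fun i => s (inl i)) -> Cls I b (fun i => upd s c u (inl i)).
Proof.
  intros H. apply (Cls_fin I b _ _ (match c with inl j => [j] | inr _ => [] end) H).
  intros k Hk. apply upd_neq. destruct c as [j|n]; [|discriminate]. intro E. injection E as E. subst. apply Hk. left; auto.
Qed.

Lemma Good_upd M (s : I + nat -> I) c u : idx c <= M ->
  Good I f M (fun i => s (inl i)) -> Good I f M (fun i => upd s c u (inl i)).
Proof.
  intros Hc [G1 G2].
  assert (forall n, M <= n -> upd s c u (inl (f n)) = s (inl (f n))) as K.
  { intros n Hn. apply upd_neq. intro E. subst c. simpl in Hc. rewrite (finv_f I f Hf) in Hc. lia. }
  unfold Good. rewrite !K by lia. auto.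
Qed.

Lemma upd_self' {T U} (t : T -> U) i (s : T -> U) : (forall j, j <> i -> t j = s j) -> t = upd s i (t i).
Proof.
  intros H. apply functional_extensionality. intro c. destruct (classic (c = i)) as [->|Hc].
  - rewrite upd_eq. auto.
  - rewrite upd_neq; auto.
Qed.

Definition InvB (b : (I + nat -> I) -> Prop) : Prop :=
  exists N, forall M, N <= M -> forall s, C0 I (fun i => s (inl i)) -> Good I f M (fun i => s (inl i)) ->
    (b s <-> b (fun c => s (tauh M c))).

Lemma Gen_InvB b : Gen Gsrc b -> InvB b.
Proof.
  induction 1 as [x [a <-]|x y _ [N1 H1] _ [N2 H2]|x y _ [N1 H1] _ [N2 H2]|x _ [N1 H1]| | |c x _ [N1 H1]|c d].
  - destruct (sval_P _ _ _ a) as [G HG].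
    destruct (avoid I f Hf G) as [N HN]. exists N. intros M HM s HC HG2.
    apply (HG _ _ (leaf_tau I f Hf G M _ (fun n Hn => HN n (Nat.le_trans _ _ _ HM Hn)) HC HG2)).
  - exists (max N1 N2). intros M HM s HC HG. simpl. rewrite (H1 M), (H2 M); auto; try tauto; lia.
  - exists (max N1 N2). intros M HM s HC HG. simpl. rewrite (H1 M), (H2 M); auto; try tauto; lia.
  - exists N1. intros M HM s HC HG. simpl. rewrite (H1 M); auto; tauto.
  - exists 0. intros; simpl; tauto.
  - exists 0. intros; simpl; tauto.
  - exists (max N1 (idx c)). intros M HM s HC HG. simpl. unfold set_cyl. split.
    + intros [t [Ht Et]].
      rewrite (upd_self' t c s Et) in Ht.
      exists (upd (fun d => s (tauh M d)) c (t c)). split.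
      * rewrite <- upd_tauh by lia.
        apply (proj1 (H1 M ltac:(lia) (upd s c (t c)) (Cls_inl_upd _ s c (t c) HC) (Good_upd M s c (t c) ltac:(lia) HG))). exact Ht.
      * intros j Hj. rewrite upd_neq; auto.
    + intros [t [Ht Et]].
      rewrite (upd_self' t c _ Et) in Ht. rewrite <- upd_tauh in Ht by lia.
      exists (upd s c (t c)). split.
      * apply (proj2 (H1 M ltac:(lia) (upd s c (t c)) (Cls_inl_upd _ s c (t c) HC) (Good_upd M s c (t c) ltac:(lia) HG))). exact Ht.
      * intros j Hj. rewrite upd_neq; auto.
  - exists (max (idx c) (idx d)). intros M HM s HC HG. simpl. rewrite !tauh_fix by lia. tauto.
Qed.

Lemma id_Perm0 : Perm0 I f (fun x => x).
Proof.
  assert (C0 I (fun x => x)) as H0 by (exists []; auto).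
  split; [split; [left; auto|intros x y E; auto]|].
  intros H1. apply (C0_C1 I f Hf _ H0 H1).
Qed.

Lemma e_Perm0 : e (Perm0 I f) = meet (fullCs (I + nat) I) (e (Inj01 I f)) (compl (fullCs (I + nat) I) (sB (ty (eA x01)))).
Proof.
  apply functional_extensionality; intro s. apply propositional_extensionality.
  change (e (Perm0 I f) s <-> (e (Inj01 I f) s /\ ~ sB (ty (eA x01)) s)).
  pose proof (ty_eA_Inj s) as K. unfold sB in *. unfold e, Perm0, Inj1 in *. tauto.
Qed.

Lemma e_Inj1 : e (Inj1 I f) = sB (ty (eA x01)).
Proof.
  apply functional_extensionality; intro s. apply propositional_extensionality.
  pose proof (ty_eA_Inj s) as K. unfold sB in *. unfold e. tauto.
Qed.

Lemma P2_Perm0 : P2 (Perm0 I f).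
Proof.
  unfold P2. rewrite e_Perm0. apply g_meet.
  - apply g_base. exists x01. reflexivity.
  - apply g_compl. exact (sval_P _ _ _ (ty (eA x01))).
Qed.

Lemma P2_Inj1 : P2 (Inj1 I f).
Proof. unfold P2. rewrite e_Inj1. exact (sval_P _ _ _ (ty (eA x01))). Qed.

Lemma not_Pi_A2 : ~ Pi A2.
Proof.
  intros HP.
  pose (w1 := smk (fullCs I I) P2 P2_sub (Perm0 I f) P2_Perm0).
  pose (w2 := smk (fullCs I I) P2 P2_sub (Inj1 I f) P2_Inj1).
  assert (nz : forall w : A2, forall r, sA2 w r -> w <> zero A2).
  { intros w r Hr E. rewrite E in Hr. exact Hr. }
  destruct (HP w1 w2) as [z [Z1 [Z2 Z3]]].
  - apply (nz w1 (fun x => x)). apply id_Perm0.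
  - apply (nz w2 (h I f)). apply h_Inj1.
  - intros L. apply sval_inj. unfold A2. rewrite sval_meet, !sval_cylL, sval_zero.
    apply functional_extensionality; intro r. apply propositional_extensionality. split; [|simpl; contradiction].
    intros [K1 K2].
    apply (C0_C1 I f Hf r).
    + apply (cylLs_Cls L (Perm0 I f) _ r); auto. intros p [[[Hp|Hp] _] Hn]; [auto|contradiction].
    + apply (cylLs_Cls L (Inj1 I f) _ r); auto. intros p [_ Hp]; auto.
  - pose (Z := sA2 z).
    assert (Zupd : forall r i u, Z r -> Z (upd r i u)).
    { intros r i u Hr. assert (E := f_equal sA2 (Z1 i)). unfold sA2, A2 in E. rewrite sval_cyl in E.
      unfold Z, sA2. rewrite <- E. exists r. split; auto. intros j Hj. rewrite upd_neq; auto. }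
    assert (Zid : Z (fun x => x)).
    { assert (E := f_equal sA2 Z2). unfold sA2, A2 in E. rewrite sval_meet in E.
      unfold Z, sA2. assert (K := f_equal (fun F => F (fun x : I => x)) E). simpl in K.
      assert (Perm0 I f (fun x => x)) as Hp by apply id_Perm0.
      rewrite <- K in Hp. apply Hp. }
    assert (Zno : forall r, Z r -> Inj1 I f r -> False).
    { intros r Hr Hi. assert (E := f_equal sA2 Z3). unfold sA2, A2 in E. rewrite sval_meet, sval_zero in E.
      assert (K := f_equal (fun F => F r) E). simpl in K. rewrite <- K. split; auto. }
    destruct (Gen_InvB _ (sval_P _ _ _ z)) as [N HN].
    pose (M := N).
    pose (r0 := upd (upd (fun x : I => x) (f (S M)) (f M)) (f (S (S M))) (f M)).
    assert (Zr0 : Z r0) by (apply Zupd; apply Zupd; auto).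
    assert (C0r0 : C0 I r0) by (apply Cls_upd; apply Cls_upd; exists []; auto).
    assert (ne : forall a b, a <> b -> f a <> f b) by (intros a b Hab E; apply Hf in E; auto).
    assert (Gr0 : Good I f M r0).
    { unfold Good, r0. rewrite upd_neq by (apply ne; lia). rewrite upd_eq.
      rewrite (upd_neq _ (f (S (S M))) _ (f M)) by (apply ne; lia).
      rewrite (upd_neq _ (f (S M)) _ (f M)) by (apply ne; lia). rewrite upd_eq. auto. }
    assert (HZt : Z (fun i => r0 (tau I f M i))).
    { apply (HN M (le_n _) (lift2 r0) C0r0 Gr0). exact Zr0. }
    destruct (C0_tau_C1 I f Hf M r0 C0r0) as [L HL].
    apply (Zno (h I f)); [|apply h_Inj1].
    apply (fin_closed Z Zupd L _ _ HZt). intros k Hk. symmetry. apply HL. auto.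
Qed.

Lemma part_i : ~ isomorphic A A2.
Proof.
  intros [phi Hphi]. apply not_Pi_A2. apply (Pi_iso A A2 phi Hphi). apply Pi_A.
Qed.

End Main.


Theorem mainTheorem14 (I : Type) (Hinf : exists f : nat -> I, injective f) :
  (* (i) *)
  (exists (B : CAType (I + nat)) (A A' : CAType I) (e : A -> B) (e' : A' -> B),
      is_CA B /\ is_RCA A /\ is_RCA A' /\ is_CA A /\ is_CA A' /\
      gen_subreduct A B e /\ gen_subreduct A' B e' /\ ~ isomorphic A A') /\
  (* (ii) *)
  (exists (A : CAType I) (B : CAType (I + nat)) (e : A -> B) (J : B -> Prop),
      is_RCA A /\ is_CA A /\ is_CA B /\ gen_subreduct A B e /\ is_ideal B J /\
      ~ (forall b, Ig B (fun x => J x /\ exists a, e a = x) b <-> J b)) /\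
  (* (iii) *)
  (exists (A A' : CAType I) (B B' : CAType (I + nat)) (eA : A -> B) (eA' : A' -> B')
          (i : A -> A'),
      is_RCA A /\ is_RCA A' /\ is_CA A /\ is_CA A' /\ is_CA B /\ is_CA B' /\
      gen_subreduct A B eA /\ gen_subreduct A' B' eA' /\
      iso A A' i /\
      ~ exists ib : B -> B', iso B B' ib /\ forall a, ib (eA a) = eA' (i a)).
Proof.
  destruct Hinf as [f Hf].
  assert (CAB : is_CA (B I f Hf)) by (apply SubCA_CA; apply fullCs_CA).
  assert (CAB' : is_CA (B' I f Hf)) by (apply SubCA_CA; apply fullCs_CA).
  assert (CAA : is_CA (A I f Hf)) by (apply SubCA_CA; apply fullCs_CA).
  assert (CAA2 : is_CA (A2 I f Hf)) by (apply SubCA_CA; apply fullCs_CA).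
  assert (RA : is_RCA (A I f Hf)) by apply Sub_full_RCA.
  assert (RA2 : is_RCA (A2 I f Hf)) by apply Sub_full_RCA.
  split; [|split].
  - exists (B I f Hf), (A I f Hf), (A2 I f Hf), (eA I f Hf), (e2 I f Hf).
    exact (conj CAB (conj RA (conj RA2 (conj CAA (conj CAA2 (conj (eA_gen I f Hf) (conj (e2_gen I f Hf) (part_i I f Hf)))))))).
  - exists (A I f Hf), (B I f Hf), (eA I f Hf), (Jii I f Hf).
    exact (conj RA (conj CAA (conj CAB (conj (eA_gen I f Hf) (conj (Jii_ideal I f Hf) (part_ii I f Hf)))))).
  - exists (A I f Hf), (A I f Hf), (B I f Hf), (B' I f Hf), (eA I f Hf), (eA' I f Hf), (fun x => x).
    exact (conj RA (conj RA (conj CAA (conj CAA (conj CAB (conj CAB' (conj (eA_gen I f Hf) (conj (eA'_gen I f Hf)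
      (conj (iso_id I (A I f Hf)) (part_iii I f Hf)))))))))).
Qed.
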